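(* Let $A=(a_{ij})$ be a real $n\times n$ matrix with nonnegative entries, $\mathbf 1=(1,\ldots,1)^{\mathrm T}$, $L=\operatorname{diag}(A\mathbf 1)-A$, let $S$ be the orthogonal projection of $\mathbb R^n$ onto $\mathcal R(L)\oplus\operatorname{span}(\mathbf 1)$, and let $\tilde J$ be the eigenprojection of $L$ corresponding to the eigenvalue $0$. Then $S\tilde J S=\tilde J S$ and $\operatorname{rank}(\tilde J S)=1$.
   Context: $\mathcal R(M)$ and $\mathcal N(M)$ denote range and null space of a matrix $M$. The index $\operatorname{ind}M$ is the smallest $k\ge0$ with $\operatorname{rank}M^{k+1}=\operatorname{rank}M^k$. The eigenprojection of $M$ corresponding to the eigenvalue $0$ is the idempotent matrix $Z$ with $\mathcal R(Z)=\mathcal N(M^{\nu})$ and $\mathcal N(Z)=\mathcal R(M^{\nu})$, where $\nu=\operatorname{ind}M$. *)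

(* Defs.v *)
From HB Require Import structures.
From mathcomp Require Import all_boot all_order all_algebra.
Set Implicit Arguments. Unset Strict Implicit. Unset Printing Implicit Defensive.
Import Order.TTheory GRing.Theory Num.Theory.
Local Open Scope ring_scope.

(* MathComp's
   subspace calculus (%MS) works with ROW spaces, so a subspace of R^n is
   represented by a matrix whose rows are the transposes of spanning
   column vectors. *)

Definition onesv (R : pzRingType) (n : nat) : 'cV[R]_n := const_mx 1.

Definition laplacian (R : pzRingType) (n : nat) (A : 'M[R]_n) : 'M[R]_n :=
  diag_mx (A *m onesv R n)^T - A.

(* range R(M) = column space of M (as a row space: rows of M^T) *)
Definition mxrange (R : fieldType) (m n : nat) (M : 'M[R]_(m, n)) : 'M[R]_(n, m) :=
  M^T.

(* null space N(M) = { v | M v = 0 } (as a row space: kermx M^T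
   spans { v^T | v^T M^T = 0 }) *)
Definition mxnull (R : fieldType) (m n : nat) (M : 'M[R]_(m, n)) : 'M[R]_n :=
  kermx M^T.

Definition is_orth_proj (R : fieldType) (n k : nat) (P : 'M[R]_n) (V : 'M[R]_(k, n)) :=
  [/\ P *m P = P, P^T = P & (mxrange P == V)%MS].

Definition is_index (R : fieldType) (n : nat) (M : 'M[R]_n) (nu : nat) :=
  \rank (M ^+ nu.+1) = \rank (M ^+ nu) /\
  (forall k, (k < nu)%N -> \rank (M ^+ k.+1) <> \rank (M ^+ k)).

Definition is_eigenproj0 (R : fieldType) (n : nat) (M Z : 'M[R]_n) :=
  exists nu, [/\ is_index M nu, Z *m Z = Z,
                 (mxrange Z == mxnull (M ^+ nu))%MS &
                 (mxnull Z == mxrange (M ^+ nu))%MS].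

(* Main.v *)
Require Import Defs.
From HB Require Import structures.
From mathcomp Require Import all_boot all_order all_algebra.
Import Order.TTheory GRing.Theory Num.Theory.
Local Open Scope ring_scope.

Lemma lapE (R : realFieldType) n (A : 'M[R]_n) m (v : 'M[R]_(n,m)) i c :
  (laplacian A *m v) i c = \sum_j A i j * (v i c - v j c).
Proof.
rewrite /laplacian mulmxBl mul_diag_mx !mxE /onesv.
under eq_bigr do rewrite mxE.
rewrite mulr_suml -sumrB; apply: eq_bigr => j _; rewrite mulr1 mulrBr //.
Qed.

Lemma maxp (R : realFieldType) n (A : 'M[R]_n) (A_ge0 : forall i j, 0 <= A i j)
  m (x : 'M[R]_(n,m)) c : laplacian A *m (laplacian A *m x) = 0 ->
  forall i, (laplacian A *m x) i c <= 0.
Proof.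
set y := laplacian A *m x => Hy i.
case: (@arg_maxP _ R _ i predT (fun k => y k c) isT) => k0 _ Hk0.
pose Mset := [pred k | y k c == y k0 c].
have closed : forall k j, Mset k -> 0 < A k j -> Mset j.
  move=> k j /eqP Mk Akj.
  have : \sum_j A k j * (y k c - y j c) = 0 by rewrite -lapE Hy mxE.
  move/eqP; rewrite psumr_eq0; last first.
    by move=> l _; apply: mulr_ge0 => //; rewrite subr_ge0 Mk; exact: Hk0.
  move/allP/(_ j (mem_index_enum _)); rewrite /= mulf_eq0 subr_eq0 gt_eqF //=.
  by rewrite /Mset /= Mk eq_sym.
have Mk0 : Mset k0 by rewrite /Mset /=.
case: (@arg_minP _ R _ k0 Mset (fun k => x k c) Mk0) => k1 Mk1 Hk1.
have : y k1 c <= 0.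
  rewrite /y lapE; apply: sumr_le0 => j _.
  have [Aj|Aj] := leP (A k1 j) 0.
    have -> : A k1 j = 0 by apply/eqP; rewrite eq_le Aj A_ge0.
    by rewrite mul0r.
  by apply: mulr_ge0_le0; [exact: A_ge0 | rewrite subr_le0; exact: (Hk1 j (closed k1 j Mk1 Aj))].
move: Mk1; rewrite /Mset /= => /eqP ->.
by apply: le_trans; apply: Hk0.
Qed.

Lemma lapker (R : realFieldType) n (A : 'M[R]_n) (A_ge0 : forall i j, 0 <= A i j)
  m (x : 'M[R]_(n,m)) : laplacian A *m (laplacian A *m x) = 0 ->
  laplacian A *m x = 0.
Proof.
move=> H; apply/matrixP => i c; rewrite [RHS]mxE; apply/eqP; rewrite eq_le.
rewrite (maxp _ _ _ A_ge0 _ _ _ H) /=.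
have H' : laplacian A *m (laplacian A *m (- x)) = 0 by rewrite !mulmxN H oppr0.
have := maxp _ _ _ A_ge0 _ _ c H' i; by rewrite mulmxN [X in X <= _]mxE oppr_le0.
Qed.

Lemma lap1 (R : realFieldType) n (A : 'M[R]_n) : laplacian A *m onesv R n = 0.
Proof.
apply/matrixP => i c; rewrite lapE [RHS]mxE big1 // => j _.
by rewrite /onesv !mxE subrr mulr0.
Qed.

Theorem lemmaA2 (R : realFieldType) (n : nat) (n_gt0 : (0 < n)%N)
  (A : 'M[R]_n) (A_ge0 : forall i j, 0 <= A i j)
  (S Jt : 'M[R]_n)
  (HS : is_orth_proj S (mxrange (laplacian A) + (onesv R n)^T)%MS)
  (HJ : is_eigenproj0 (laplacian A) Jt) :
  S *m Jt *m S = Jt *m S /\ \rank (Jt *m S) = 1%N.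
Proof.
set L := laplacian A in HS HJ *.
set one := onesv R n in HS *.
have L1 : L *m one = 0 by exact: lap1.
have one_neq0 : one != 0.
  apply/eqP => /matrixP /(_ (Ordinal n_gt0) 0); rewrite /one /onesv !mxE.
  by move/eqP; rewrite oner_eq0.
have rkL : \rank L <> n.
  move=> HL; have : L \in unitmx by rewrite -row_free_unit /row_free HL.
  move=> /mulKmx h; move: (h _ one); rewrite L1 mulmx0 => /esym/eqP.
  by rewrite (negbTE one_neq0).
have rkL2 : \rank (L ^+ 2) = \rank L.
  rewrite expr2 -mulmxE -mxrank_tr trmx_mul -(mxrank_tr L).
  have sub : (kermx (L^T *m L^T) <= kermx L^T)%MS.
    have hK := mulmx_ker (L^T *m L^T).
    move: (kermx (L^T *m L^T)) hK => K hK.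
    rewrite sub_kermx; apply/eqP.
    have h2 : L *m (L *m K^T) = 0.
      by apply: trmx_inj; rewrite trmx0 !trmx_mul trmxK -mulmxA.
    have := lapker _ _ _ A_ge0 _ _ h2.
    by move/(congr1 trmx); rewrite trmx0 trmx_mul trmxK.
  have := mxrankS sub; rewrite !mxrank_ker.
  have := mxrankM_maxl L^T L^T; have := rank_leq_col L^T.
  have := rank_leq_col (L^T *m L^T).
  move=> a b c d; apply/eqP; rewrite eqn_leq c /=.
  by rewrite -(leq_sub2lE (m:=n)) // ?(leq_trans c b).
case: HJ => nu [[Hr Hmin] JJ H1 H2].
have nu1 : nu = 1%N.
  case: nu Hr Hmin {H1 H2} => [|[|k]] Hr Hmin //.
    by move: Hr; rewrite expr1 expr0 mxrank1.
  by have := Hmin 1%N isT; rewrite expr1 rkL2.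
subst nu; rewrite expr1 /mxrange /mxnull in H1 H2.
have JL : Jt *m L = 0.
  case/andP: H2 => _; rewrite sub_kermx -trmx_mul => /eqP H.
  by apply: trmx_inj; rewrite H trmx0.
have J1 : Jt *m one = one.
  have h : (one^T <= Jt^T)%MS.
    case/andP: H1 => _; apply: submx_trans.
    by rewrite sub_kermx -trmx_mul L1 trmx0.
  case/submxP: h => w hw; apply: trmx_inj.
  by rewrite trmx_mul hw -mulmxA -trmx_mul JJ.
case: HS => SS ST HS'.
have S1 : S *m one = one.
  have h : (one^T <= S^T)%MS.
    case/andP: HS' => _; apply: submx_trans; exact: addsmxSr.
  case/submxP: h => w hw; rewrite ST in hw; apply: trmx_inj.
  by rewrite trmx_mul ST hw -mulmxA SS.
have [[u1 u2] /= Hu] : exists u : 'M_(n, n) * 'M_(n, 1), S = u.1 *m L^T + u.2 *m one^T.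
  rewrite -{1}ST; apply/sub_addsmxP; by case/andP: HS'.
have JS : Jt *m S = one *m u2^T.
  apply: trmx_inj; rewrite trmx_mul ST {1}Hu mulmxDl -!mulmxA -!trmx_mul JL J1.
  by rewrite trmx0 mulmx0 add0r trmx_mul trmxK.
split; first by rewrite -mulmxA JS mulmxA S1.
apply/eqP; rewrite eqn_leq; apply/andP; split.
  by rewrite JS (leq_trans (mxrankM_maxl _ _)) // rank_leq_col.
rewrite lt0n mxrank_eq0; apply/eqP => H.
have : Jt *m S *m one = one by rewrite -mulmxA S1 J1.
by rewrite H mul0mx => /esym/eqP; rewrite (negbTE one_neq0).
Qed.
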